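(* Let $0\le s<n$ and let $\rho$ be a $1$-contact $(n-s)$-horizontal $(n-s+1)$-form on $W^1\subseteq J^1Y$, with $$p_1\rho=\big(A^{i_1\dots i_s}_\sigma\omega^\sigma+A^{i_1\dots i_sj}_\sigma\omega^\sigma_j\big)\wedge ds_{i_1\dots i_s},$$ coefficients antisymmetric in $i_1\dots i_s$. Let $\mathbb{V}_\rho$ be the variational morphism $\langle\mathbb{V}_\rho|J^1\Xi\rangle=J^1\Xi\lrcorner\,p_1\rho=(A^{i_1\dots i_s}_\sigma\Xi^\sigma+A^{i_1\dots i_sj}_\sigma\Xi^\sigma_j)\,ds_{i_1\dots i_s}$, and let $(\mathbb{E},\mathbb{T})$ be its canonical splitting with respect to the fibered connection whose coefficients vanish on the chart, i.e. the variational morphisms $\mathbb{E}$ of rank $1$ and degree $n-s$, reduced, and $\mathbb{T}$ of rank $0$ and degree $n-s-1$, such that $\langle\mathbb{V}_\rho|J^1\Xi\rangle=\langle\mathbb{E}|J^1\Xi\rangle+\mathrm{Div}(\langle\mathbb{T}|\Xi\rangle)$ for all $\pi$-vertical $\Xi$. Define $\hat t^{i_1\dots i_si}_\sigma=A^{[i_1\dots i_si]}_\sigma$ and the variational morphisms $$\langle\mathbb{T}'|\Xi\rangle=\frac{1}{s+1}\,\hat t^{i_1\dots i_si}_\sigma\Xi^\sigma\,ds_{i_1\dots i_si},$$ $$\langle\mathbb{E}'|J^1\Xi\rangle=\Big[\big(A^{i_1\dots i_s}_\sigma-d_i\hat t^{i_1\dots i_si}_\sigma\big)\Xi^\sigma+\big(A^{i_1\dots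 i_sj}_\sigma-\hat t^{i_1\dots i_sj}_\sigma\big)\Xi^\sigma_j\Big]ds_{i_1\dots i_s}.$$ Then $\langle\mathbb{V}_\rho|J^1\Xi\rangle=\langle\mathbb{E}'|J^1\Xi\rangle+\mathrm{Div}(\langle\mathbb{T}'|\Xi\rangle)$ and the two splittings coincide: $\mathbb{E}'=\mathbb{E}$ and $\mathbb{T}'=\mathbb{T}$.
   Context: Let $\pi:Y\to X$ be a fibered manifold, $n=\dim X$. Let $U\subseteq X$ be open and $W=\pi^{-1}(U)$ the domain of a fibered chart $(x^i,y^\sigma)$ with associated coordinates $(x^i,y^\sigma,y^\sigma_j)$ on $W^1\subseteq J^1Y$ and $(x^i,y^\sigma_J)$ on higher jets; repeated indices are summed over $1,\dots,n$. Square brackets denote antisymmetrization (weight $1/(\text{number of indices})!$). Contact forms $\omega^\sigma=dy^\sigma-y^\sigma_idx^i$, $\omega^\sigma_j=dy^\sigma_j-y^\sigma_{ji}dx^i$. $ds=dx^1\wedge\dots\wedge dx^n$, $ds_{i_1\dots i_p}=\frac{\partial}{\partial x^{i_p}}\lrcorner\dots\lrcorner\frac{\partial}{\partial x^{i_1}}\lrcorner ds$. Formal derivative $d_i=\frac{\partial}{\partial x^i}+\sum_J y^\sigma_{Ji}\frac{\partial}{\partial y^\sigma_J}$. $p_1$ denotes the $1$-contact component (pull back to $J^2Y$, substitute $dy^\sigma_J=\omega^\sigma_J+y^\sigma_{Ji}dx^i$, keep terms with exactly one $\omega$). For a $\pi$-vertical vector field $\Xi=\Xi^\sigma\partial/\partial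 y^\sigma$, $J^1\Xi=\Xi^\sigma\partial/\partial y^\sigma+\Xi^\sigma_j\partial/\partial y^\sigma_j$ with $\Xi^\sigma_j=d_j\Xi^\sigma$. A variational morphism of rank $r$ and degree $n-s$ assigns to each such $\Xi$ the horizontal form $\frac{1}{s!}\big(\sum_{|J|\le r}v^{i_1\dots i_sJ}_\sigma\Xi^\sigma_J\big)ds_{i_1\dots i_s}$ (coefficients antisymmetric in $i_1\dots i_s$, symmetric in $J$); it is reduced (with respect to the fibered connection with vanishing coefficients) if each of its terms of rank $h\ge1$ satisfies $v^{[i_1\dots i_sj_1]j_2\dots j_h}_\sigma=0$. For a horizontal form $\beta=f^{i_1\dots i_p}ds_{i_1\dots i_p}$ depending on $x$, jets of $y$ and of $\Xi$, $\mathrm{Div}(\beta)=d_lf^{i_1\dots i_p}\,dx^l\wedge ds_{i_1\dots i_p}$, with $d_l$ acting also on $\Xi$-variables by $d_l\Xi^\sigma_J=\Xi^\sigma_{Jl}$. For $r=1$ the pair $(\mathbb{E},\mathbb{T})$ described in the claim is uniquely determined by these conditions. *)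

(* Defs.v *)
From HB Require Import structures.
From mathcomp Require Import all_boot all_order all_algebra all_fingroup.
Set Implicit Arguments. Unset Strict Implicit. Unset Printing Implicit Defensive.
Import GRing.Theory.
Local Open Scope ring_scope.

Section FormalJets.
Variables (R : numFieldType) (F : comAlgType R) (n m : nat).
(* F : ring of (smooth) functions on the jet spaces over the chart domain;
   n = dim X, m = fiber dimension, indices sigma : 'I_m. *)

(* multi-indices J (symmetric), encoded by multiplicities *)
Definition mindex := {ffun 'I_n -> nat}.
Definition mi0 : mindex := [ffun => 0%N].
Definition mi1 (j : 'I_n) : mindex := [ffun l => nat_of_bool (l == j)].
Definition mi_dec (a : mindex) (i : 'I_n) : mindex :=
  [ffun l => if l == i then (a l).-1 else a l].

(* A "Xi-linear expression"  sum_{sigma,J} c sigma J * Xi^sigma_J ,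
   the Xi^sigma_J being treated as free symbols (jets of an arbitrary
   pi-vertical field Xi). *)
Definition xexpr := 'I_m -> mindex -> F.

(* formal derivative d_i acting on functions and on Xi-variables:
   d_i Xi^sigma_J = Xi^sigma_{Ji} *)
Definition dX (d : 'I_n -> F -> F) (i : 'I_n) (e : xexpr) : xexpr :=
  fun sg a => d i (e sg a) + (if (0 < a i)%N then e sg (mi_dec a i) else 0).

(* horizontal (n-p)-form  sum_I f^I ds_I , I = (i_1..i_p) *)
Definition hform (p : nat) := ('I_p -> 'I_n) -> xexpr.

Definition hadd p (f g : hform p) : hform p := fun I sg a => f I sg a + g I sg a.

(* equality of horizontal forms: since ds_{I o pi} = sgn(pi) ds_I and
   ds_I = 0 for repeated indices, two coefficient families define the same
   form iff their signed symmetrizations agree. *)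
Definition heq p (f g : hform p) : Prop :=
  forall (I : 'I_p -> 'I_n) sg a,
    \sum_(pi : 'S_p) (-1) ^+ odd_perm pi * f (fun k => I (pi k)) sg a =
    \sum_(pi : 'S_p) (-1) ^+ odd_perm pi * g (fun k => I (pi k)) sg a.

Definition antisym p (c : ('I_p -> 'I_n) -> 'I_m -> F) : Prop :=
  forall (I : 'I_p -> 'I_n) (pi : 'S_p) sg,
    c (fun k => I (pi k)) sg = (-1) ^+ odd_perm pi * c I sg.

Definition ins p (K : 'I_p -> 'I_n) (k : 'I_p.+1) (i : 'I_n) : 'I_p.+1 -> 'I_n :=
  fun j => match unlift k j with Some j' => K j' | None => i end.
Definition snoc p (K : 'I_p -> 'I_n) (i : 'I_n) : 'I_p.+1 -> 'I_n := ins K ord_max i.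
Definition initI p (K : 'I_p.+1 -> 'I_n) : 'I_p -> 'I_n :=
  fun k => K (widen_ord (leqnSn p) k).
Definition lastI p (K : 'I_p.+1 -> 'I_n) : 'I_n := K ord_max.

(* Div (f^I ds_I) = d_l f^I dx^l /\ ds_I, using
   dx^l /\ ds_{i_1..i_{p+1}} = sum_k (-1)^{p+1-k} delta^l_{i_k} ds_{i_1..^i_k..i_{p+1}} *)
Definition Div (d : 'I_n -> F -> F) p (f : hform p.+1) : hform p :=
  fun K sg a => \sum_(k < p.+1) \sum_(i < n)
      (-1) ^+ (p - k) * dX d i (f (ins K k i)) sg a.

(* <E | J^1 Xi> for a variational morphism of rank 1, degree n-s, with
   coefficients v^{I}_sigma = v0, v^{I j}_sigma = v1 :
   (1/s!) (v^I_sigma Xi^sigma + v^{Ij}_sigma Xi^sigma_j) ds_I *)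
Definition pair1 s (v0 : ('I_s -> 'I_n) -> 'I_m -> F)
    (v1 : ('I_s -> 'I_n) -> 'I_n -> 'I_m -> F) : hform s :=
  fun I sg a => (s`!%:R : R)^-1 *:
    ((if a == mi0 then v0 I sg else 0) +
     \sum_(j < n) (if a == mi1 j then v1 I j sg else 0)).

(* <T | Xi> for a variational morphism of rank 0, degree n-(s+1) *)
Definition pair0 s (t : ('I_s.+1 -> 'I_n) -> 'I_m -> F) : hform s.+1 :=
  fun K sg a => ((s.+1)`!%:R : R)^-1 *: (if a == mi0 then t K sg else 0).

Definition reduced s (v1 : ('I_s -> 'I_n) -> 'I_n -> 'I_m -> F) : Prop :=
  forall (K : 'I_s.+1 -> 'I_n) sg,
    ((s.+1)`!%:R : R)^-1 *:
      \sum_(pi : 'S_s.+1) (-1) ^+ odd_perm pi *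
        v1 (initI (fun k => K (pi k))) (lastI (fun k => K (pi k))) sg = 0.

Definition Vrho s (A0 : ('I_s -> 'I_n) -> 'I_m -> F)
    (A1 : ('I_s -> 'I_n) -> 'I_n -> 'I_m -> F) : hform s :=
  fun I sg a => (if a == mi0 then A0 I sg else 0) +
     \sum_(j < n) (if a == mi1 j then A1 I j sg else 0).

Definition that s (A1 : ('I_s -> 'I_n) -> 'I_n -> 'I_m -> F)
    (K : 'I_s.+1 -> 'I_n) (sg : 'I_m) : F :=
  ((s.+1)`!%:R : R)^-1 *:
    \sum_(pi : 'S_s.+1) (-1) ^+ odd_perm pi *
       A1 (initI (fun k => K (pi k))) (lastI (fun k => K (pi k))) sg.

Definition Tprime s (A1 : ('I_s -> 'I_n) -> 'I_n -> 'I_m -> F) : hform s.+1 :=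
  fun K sg a => (s.+1%:R : R)^-1 *: (if a == mi0 then that A1 K sg else 0).

Definition Eprime (d : 'I_n -> F -> F) s (A0 : ('I_s -> 'I_n) -> 'I_m -> F)
    (A1 : ('I_s -> 'I_n) -> 'I_n -> 'I_m -> F) : hform s :=
  fun I sg a =>
    (if a == mi0 then A0 I sg - \sum_(i < n) d i (that A1 (snoc I i) sg) else 0) +
    \sum_(j < n) (if a == mi1 j then A1 I j sg - that A1 (snoc I j) sg else 0).

End FormalJets.

(* Main.v *)
Require Import Defs.
From Stdlib Require Import FunctionalExtensionality.
From HB Require Import structures.
From mathcomp Require Import all_boot all_order all_algebra all_fingroup.
Set Implicit Arguments. Unset Strict Implicit. Unset Printing Implicit Defensive.
Import GRing.Theory Num.Theory.
Local Open Scope ring_scope.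

Section Aux.
Variables (R : numFieldType) (F : comAlgType R) (n m : nat).

Lemma sign2 (b : bool) (x : F) : (-1) ^+ b * ((-1) ^+ b * x) = x.
Proof. by case: b; rewrite ?mul1r // !mulN1r opprK. Qed.

Lemma ins_lift p (K : 'I_p -> 'I_n) k i (j : 'I_p) : ins K k i (lift k j) = K j.
Proof. by rewrite /ins liftK. Qed.

Lemma ins_id p (K : 'I_p -> 'I_n) k i : ins K k i k = i.
Proof. by rewrite /ins unlift_none. Qed.

Lemma ins_perm p (K : 'I_p -> 'I_n) (k : 'I_p.+1) i :
  ins K k i = (fun j => snoc K i (lift_perm k ord_max 1 j)).
Proof.
apply: functional_extensionality => j; rewrite /snoc.
case: (unliftP k j) => [j'|] ->.
  by rewrite lift_perm_lift perm1 !ins_lift.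
by rewrite lift_perm_id !ins_id.
Qed.

Lemma snoc_perm p (K : 'I_p -> 'I_n) i (pi : 'S_p) :
  snoc (fun k => K (pi k)) i = (fun j => snoc K i (lift_perm ord_max ord_max pi j)).
Proof.
apply: functional_extensionality => j; rewrite /snoc.
case: (unliftP ord_max j) => [j'|] ->.
  by rewrite lift_perm_lift !ins_lift.
by rewrite lift_perm_id !ins_id.
Qed.

Lemma snoc_init p (K : 'I_p.+1 -> 'I_n) : snoc (Defs.initI K) (Defs.lastI K) = K.
Proof.
apply: functional_extensionality => j; rewrite /snoc.
case: (unliftP ord_max j) => [j'|] ->; last by rewrite ins_id.
rewrite ins_lift /Defs.initI; congr K; apply: val_inj => /=.
by rewrite /bump leqNgt ltn_ord.
Qed.

Lemma antisym_snoc p (t : ('I_p.+1 -> 'I_n) -> 'I_m -> F) :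
  antisym t -> forall i, antisym (fun K => t (snoc K i)).
Proof.
move=> ht i K pi sg /=; rewrite snoc_perm ht odd_lift_perm.
by rewrite addbb.
Qed.

Lemma antisym_ins p (t : ('I_p.+1 -> 'I_n) -> 'I_m -> F) (K : 'I_p -> 'I_n) (k : 'I_p.+1) i sg :
  antisym t -> (-1) ^+ (p - k) * t (ins K k i) sg = t (snoc K i) sg.
Proof.
move=> ht; rewrite ins_perm ht odd_lift_perm odd_perm1 addbF /=.
have hk : (k <= p)%N by rewrite -ltnS ltn_ord.
rewrite -signr_odd (oddB hk) addbC.
by rewrite sign2.
Qed.

Lemma alt_const p (f : ('I_p -> 'I_n) -> F) :
  (forall I (pi : 'S_p), f (fun k => I (pi k)) = (-1) ^+ odd_perm pi * f I) ->
  forall I, \sum_(pi : 'S_p) (-1) ^+ odd_perm pi * f (fun k => I (pi k)) = p`!%:R * f I.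
Proof.
move=> hf I; under eq_bigr => pi _ do rewrite hf sign2.
by rewrite sumr_const card_Sn mulr_natl.
Qed.

Lemma natf_cancel k (x y : F) : k`!%:R * x = k`!%:R * y -> x = y.
Proof.
move=> h.
have nz : (k`!%:R : R) != 0 by rewrite pnatr_eq0 -lt0n fact_gt0.
have e (z : F) : z = (k`!%:R : R)^-1 *: (k`!%:R * z).
  by rewrite mulr_natl -scaler_nat scalerA mulVf // scale1r.
by rewrite (e x) (e y) h.
Qed.


Lemma mi_dec_eq (a : mindex n) i : ((0 < a i)%N && (mi_dec a i == (mi0 n))) = (a == mi1 i).
Proof.
apply/idP/eqP.
  case/andP=> ha /eqP e; apply/ffunP => l; move/ffunP: e => /(_ l).
  rewrite !ffunE; case: eqP => [->|_] //.
  by move: ha; case: (a i) => [|[|k]].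
move=> ->; rewrite !ffunE eqxx /=; apply/eqP/ffunP => l.
by rewrite !ffunE; case: (l == i).
Qed.

Lemma mi1_eq (j j' : 'I_n) : (mi1 j == mi1 j') = (j' == j).
Proof.
apply/eqP/eqP => [/ffunP /(_ j')|->] //.
by rewrite !ffunE eqxx; case: eqP.
Qed.

Lemma mi0_mi1 (j : 'I_n) : ((mi0 n) == mi1 j) = false.
Proof. by apply/eqP => /ffunP /(_ j); rewrite !ffunE eqxx. Qed.

Variable d : 'I_n -> {linear F -> F}.

Lemma dsign i b (x : F) : d i ((-1) ^+ b * x) = (-1) ^+ b * d i x.
Proof. by rewrite -signr_odd; case: (odd b); rewrite ?mul1r // !mulN1r raddfN. Qed.

Lemma Div_form p (g : ('I_p.+1 -> 'I_n) -> 'I_m -> F) (c : R) : antisym g ->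
  forall K sg a, Div (fun i => d i) (fun K sg a => c *: (if a == (mi0 n) then g K sg else 0)) K sg a
  = (c * p.+1%:R) *: \sum_(i < n) ((if a == (mi0 n) then d i (g (snoc K i) sg) else 0)
                                 + (if a == mi1 i then g (snoc K i) sg else 0)).
Proof.
move=> hg K sg a; rewrite /Div.
have te (k : 'I_p.+1) (i : 'I_n) : (-1) ^+ (p - k) * dX (fun i => d i) i
     ((fun K sg a => c *: (if a == (mi0 n) then g K sg else 0)) (ins K k i)) sg a
   = c *: ((if a == (mi0 n) then d i (g (snoc K i) sg) else 0)
                                 + (if a == mi1 i then g (snoc K i) sg else 0)).
  rewrite /dX linearZ /= -mi_dec_eq.
  have [ea|nea] := eqVneq a (mi0 n).
    rewrite ea ffunE ltnn /= addr0 -(antisym_ins K k i sg hg) dsign addr0.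
    by rewrite scalerAr.
  rewrite linear0 scaler0 !add0r.
  case: (0 < a i)%N => /=; last by rewrite scaler0 mulr0.
  case: (mi_dec a i == mi0 n) => /=; last by rewrite !scaler0 mulr0.
  by rewrite -(antisym_ins K k i sg hg) scalerAr.
under eq_bigr => k _ do under eq_bigr => i _ do rewrite te.
rewrite sumr_const card_ord -scaler_sumr -scalerA scaler_nat.
by rewrite scalerMnr.
Qed.


Lemma heq_pt p (f g : hform F n m p) : (forall I sg a, f I sg a = g I sg a) -> heq f g.
Proof. by move=> h I sg a; apply: eq_bigr => pi _; rewrite h. Qed.

Lemma scale_if (c : R) (b : bool) (x : F) : c *: (if b then x else 0) = if b then c *: x else 0.
Proof. by case: b; rewrite ?scaler0. Qed.

Lemma sign_if (y : F) (b : bool) (x : F) : y * (if b then x else 0) = if b then y * x else 0.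
Proof. by case: b; rewrite ?mulr0. Qed.

Lemma scale_cancel0 (c : R) (x : F) : c != 0 -> c *: x = 0 -> x = 0.
Proof. by move=> nz h; rewrite -[x]scale1r -(mulVf nz) -scalerA h scaler0. Qed.


Lemma fact_nz k : (k`!%:R : R) != 0.
Proof. by rewrite pnatr_eq0 -lt0n fact_gt0. Qed.

Lemma succ_nz k : (k.+1%:R : R) != 0.
Proof. by rewrite pnatr_eq0. Qed.

Lemma fact_inv k : ((k.+1)`!%:R : R)^-1 * k.+1%:R = (k`!%:R)^-1.
Proof. by rewrite factS natrM invfM mulrAC mulVf ?mul1r ?succ_nz. Qed.

Lemma alt_antisym p (h : ('I_p -> 'I_n) -> F) (K : 'I_p -> 'I_n) (rho : 'S_p) :
  \sum_(pi : 'S_p) (-1) ^+ odd_perm pi * h (fun k => K (rho (pi k)))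
  = (-1) ^+ odd_perm rho * \sum_(pi : 'S_p) (-1) ^+ odd_perm pi * h (fun k => K (pi k)).
Proof.
have e (pi : 'S_p) : (fun k => K (rho (pi k))) = (fun k => K ((pi * rho)%g k)).
  by apply: functional_extensionality => k; rewrite permM.
under eq_bigr => pi _ do rewrite e.
rewrite (reindex_inj (mulIg rho^-1)%g) /= mulr_sumr.
apply: eq_bigr => pi _; rewrite mulgKV odd_permM odd_permV signr_addb.
by rewrite mulrA [_ * (-1) ^+ _]mulrC.
Qed.

Lemma that_antisym s (A1 : ('I_s -> 'I_n) -> 'I_n -> 'I_m -> F) : antisym (that A1).
Proof.
move=> K rho sg; rewrite /that /=.
rewrite (alt_antisym (fun K => A1 (Defs.initI K) (Defs.lastI K) sg) K rho).
by rewrite scalerAr.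
Qed.

Lemma Vrho_antisym s (A0 : ('I_s -> 'I_n) -> 'I_m -> F) (A1 : ('I_s -> 'I_n) -> 'I_n -> 'I_m -> F) :
  antisym A0 -> (forall j, antisym (fun I => A1 I j)) ->
  forall I (pi : 'S_s) sg a, Vrho A0 A1 (fun k => I (pi k)) sg a = (-1) ^+ odd_perm pi * Vrho A0 A1 I sg a.
Proof.
move=> h0 h1 I pi sg a.
have h1' j : A1 (fun k => I (pi k)) j sg = (-1) ^+ odd_perm pi * A1 I j sg := h1 j I pi sg.
rewrite /Vrho h0 mulrDr sign_if mulr_sumr; congr (_ + _).
by apply: eq_bigr => j _; rewrite h1' sign_if.
Qed.

End Aux.

Theorem proposition4p3 (R : numFieldType) (F : comAlgType R) (n m s : nat)
  (d : 'I_n -> {linear F -> F})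
  (d_leibniz : forall i (a b : F), d i (a * b) = d i a * b + a * d i b)
  (d_comm : forall i j (a : F), d i (d j a) = d j (d i a))
  (hs : (s < n)%N)
  (A0 : ('I_s -> 'I_n) -> 'I_m -> F) (A1 : ('I_s -> 'I_n) -> 'I_n -> 'I_m -> F)
  (hA0 : antisym A0) (hA1 : forall j, antisym (fun I => A1 I j)) :
  heq (Vrho A0 A1) (hadd (Eprime (fun i => d i) A0 A1) (Div (fun i => d i) (Tprime A1)))
  /\ (forall (e0 : ('I_s -> 'I_n) -> 'I_m -> F)
             (e1 : ('I_s -> 'I_n) -> 'I_n -> 'I_m -> F)
             (t : ('I_s.+1 -> 'I_n) -> 'I_m -> F),
        antisym e0 -> (forall j, antisym (fun I => e1 I j)) -> reduced e1 ->
        antisym t ->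
        heq (Vrho A0 A1) (hadd (pair1 e0 e1) (Div (fun i => d i) (pair0 t))) ->
        heq (pair1 e0 e1) (Eprime (fun i => d i) A0 A1) /\ heq (pair0 t) (Tprime A1)).
Proof.
split.
  apply: heq_pt => J sg a.
  have E : Div (fun i => d i) (Tprime A1) J sg a =
    (((s.+1)%:R : R)^-1 * s.+1%:R) *: \sum_(i < n) ((if a == mi0 n then d i (that A1 (snoc J i) sg) else 0)
                                 + (if a == mi1 i then that A1 (snoc J i) sg else 0)).
    exact: (Div_form d _ (that_antisym A1)).
  rewrite /Vrho /hadd /Eprime E mulVf ?succ_nz // scale1r big_split /=.
  have [ea|nea] := eqVneq a (mi0 n).
    rewrite ea /=.
    have z (f : 'I_n -> F) : \sum_(j < n) (if mi0 n == mi1 j then f j else 0) = 0.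
      by rewrite big1 // => j _; rewrite mi0_mi1.
    by rewrite !z !addr0 subrK.
  rewrite !add0r big1_eq add0r -big_split /=.
  by apply: eq_bigr => j _; case: ifP; rewrite ?subrK ?addr0.
move=> e0 e1 t he0 he1 hred ht hX.
set c := ((s`!)%:R : R)^-1.
pose B0 J sg := c *: (e0 J sg + \sum_(i < n) d i (t (snoc J i) sg)).
pose B1 J j sg := c *: (e1 J j sg + t (snoc J j) sg).
have Xeq : forall J sg a,
    hadd (pair1 e0 e1) (Div (fun i => d i) (pair0 t)) J sg a = Vrho B0 B1 J sg a.
  move=> J sg a.
  have E : Div (fun i => d i) (pair0 t) J sg a =
    (((s.+1)`!%:R : R)^-1 * s.+1%:R) *: \sum_(i < n) ((if a == mi0 n then d i (t (snoc J i) sg) else 0)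
                                 + (if a == mi1 i then t (snoc J i) sg else 0)).
    exact: (Div_form d _ ht).
  rewrite /hadd E fact_inv -/c /pair1 -/c /Vrho /B0 /B1 -scalerDr.
  have [ea|nea] := eqVneq a (mi0 n).
    rewrite ea /=.
    have z (f : 'I_n -> F) : \sum_(j < n) (if mi0 n == mi1 j then f j else 0) = 0.
      by rewrite big1 // => j _; rewrite mi0_mi1.
    rewrite !z !addr0; congr (_ *: _).
    by rewrite big_split /= z addr0.
  rewrite !add0r; under [X in _ *: (_ + X)]eq_bigr do rewrite add0r.
  rewrite -big_split scaler_sumr /=.
  by apply: eq_bigr => j _; case: (a == mi1 j); rewrite ?addr0 ?scaler0.
have hB0 : antisym B0.
  move=> I pi sg; rewrite /B0 he0.
  have hs' i : t (snoc (fun k => I (pi k)) i) sg = (-1) ^+ odd_perm pi * t (snoc I i) sg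
    := antisym_snoc ht i I pi sg.
  under eq_bigr do rewrite hs' dsign.
  by rewrite -mulr_sumr -mulrDr scalerAr.
have hB1 : forall j, antisym (fun I => B1 I j).
  move=> j I pi sg; rewrite /B1.
  have hs' : t (snoc (fun k => I (pi k)) j) sg = (-1) ^+ odd_perm pi * t (snoc I j) sg
    := antisym_snoc ht j I pi sg.
  have he1' : e1 (fun k => I (pi k)) j sg = (-1) ^+ odd_perm pi * e1 I j sg := he1 j I pi sg.
  by rewrite hs' he1' -mulrDr scalerAr.
have VV : forall I sg a, Vrho A0 A1 I sg a = Vrho B0 B1 I sg a.
  move=> I sg a; apply: (@natf_cancel _ _ s).
  have := hX I sg a.
  under [X in X = _ -> _]eq_bigr do rewrite Vrho_antisym //.
  under [X in _ = X -> _]eq_bigr do rewrite Xeq Vrho_antisym //.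
  have sc (x : F) : \sum_(pi : 'S_s) (-1) ^+ odd_perm pi * ((-1) ^+ odd_perm pi * x) = s`!%:R * x.
    by under eq_bigr do rewrite sign2; rewrite sumr_const card_Sn mulr_natl.
  by rewrite !sc.
have hA0B I sg : A0 I sg = B0 I sg.
  have := VV I sg (mi0 n); rewrite /Vrho eqxx.
  have z (f : 'I_n -> F) : \sum_(j < n) (if mi0 n == mi1 j then f j else 0) = 0.
    by rewrite big1 // => j _; rewrite mi0_mi1.
  by rewrite !z !addr0.
have hA1B I j sg : A1 I j sg = B1 I j sg.
  have := VV I sg (mi1 j); rewrite /Vrho eq_sym mi0_mi1 !add0r.
  under eq_bigr do rewrite mi1_eq.
  under [X in _ = X -> _]eq_bigr do rewrite mi1_eq.
  by rewrite -!big_mkcond !big_pred1_eq.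
have that_eq K sg : that A1 K sg = c *: t K sg.
  rewrite /that.
  under eq_bigr do rewrite hA1B /B1 snoc_init -scalerAr mulrDr.
  rewrite -scaler_sumr big_split /=.
  have r0 := hred K sg.
  rewrite (scale_cancel0 (invr_neq0 (fact_nz R s.+1)) r0) add0r.
  rewrite (alt_const (f := fun K => t K sg)); last by move=> I pi; apply: ht.
  rewrite mulr_natl -scaler_nat !scalerA; congr (_ *: _).
  by rewrite mulrAC mulVf ?fact_nz // mul1r.
split; apply: heq_pt => I sg a.
  rewrite /pair1 /Eprime -/c hA0B.
  under [X in _ = _ + X]eq_bigr do rewrite hA1B that_eq.
  under [X in _ = (if _ then _ - X else _) + _]eq_bigr do rewrite that_eq linearZ.
  rewrite /B0 /B1 -scaler_sumr -scalerBr addrK scalerDr scale_if scaler_sumr.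
  congr (_ + _); apply: eq_bigr => j _; rewrite scale_if.
  by rewrite -scalerBr addrK.
rewrite /pair0 /Tprime that_eq scale_if [RHS]scale_if scalerA.
by rewrite factS natrM invfM.
Qed.
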